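(* Let $G=(V,E)$ be a connected undirected simple graph with $n=|V|$ nodes, adjacency matrix $\tilde{\mathbf{A}}\in\{0,1\}^{n\times n}$ (zero diagonal), and node degrees $d_l=\sum_{j=1}^n\tilde{\mathbf{A}}_{lj}$. Let $\mathbf{D}$ be the diagonal matrix with $\mathbf{D}_{ll}=1+d_l$ and $\mathbf{A}=\mathbf{D}^{-1/2}(\tilde{\mathbf{A}}+\mathbf{I})\mathbf{D}^{-1/2}$. Let $\mathbf{W}\in\mathbb{R}^{c\times c}$, $\mathbf{B}\in\mathbb{R}^{c'\times c}$, inputs $\mathbf{U}_t\in\mathbb{R}^{n\times c'}$, and consider the recurrence $\mathbf{X}_{t+1}=\mathbf{A}\mathbf{X}_t\mathbf{W}+\mathbf{U}_{t+1}\mathbf{B}$, $\mathbf{X}_t\in\mathbb{R}^{n\times c}$. Then, for large values of $t-s$, the Jacobian from node $j$ at time $s$ to node $i$ at time $t\ge s$ admits the approximation $$\frac{\partial \mathbf{X}_t^{(i)}}{\partial \mathbf{X}_s^{(j)}}\approx\frac{\sqrt{(1+d_i)(1+d_j)}}{|V|+2|E|}\,(\mathbf{W}^{\top})^{t-s},$$ in the sense that $\frac{\partial \mathbf{X}_t^{(i)}}{\partial \mathbf{X}_s^{(j)}}=c_{ij}(t-s)\,(\mathbf{W}^{\top})^{t-s}$ for scalars $c_{ij}(t-s)$ satisfying $c_{ij}(t-s)\to\frac{\sqrt{(1+d_i)(1+d_j)}}{|V|+2|E|}$ as $t-s\to\infty$.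
   Context: $\mathbf{X}_t^{(i)}\in\mathbb{R}^{1\times c}$ denotes the $i$-th row of $\mathbf{X}_t$, regarded as a function of $\mathbf{X}_s$ through the recurrence with the inputs held fixed. The Jacobian $\partial\mathbf{y}/\partial\mathbf{x}$ of row vectors is the $c\times c$ matrix with $(p,q)$ entry $\partial y_p/\partial x_q$. $|E|$ is the number of undirected edges. *)

(* Defs.v *)
From HB Require Import structures.
From mathcomp Require Import all_boot all_order all_algebra.
From mathcomp Require Import all_classical all_reals all_analysis.
Set Implicit Arguments. Unset Strict Implicit. Unset Printing Implicit Defensive.
Import Order.TTheory GRing.Theory Num.Theory.
Import numFieldNormedType.Exports.
Local Open Scope ring_scope.

Definition simple_graph (n : nat) (e : rel 'I_n) : Prop :=
  (forall x y, e x y = e y x) /\ (forall x, e x x = false).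

Definition connected_graph (n : nat) (e : rel 'I_n) : Prop :=
  forall x y, connect e x y.

Definition adjmx (R : realType) (n : nat) (e : rel 'I_n) : 'M[R]_n :=
  \matrix_(l, j) (e l j)%:R.

Definition node_degree (R : realType) (n : nat) (e : rel 'I_n) (l : 'I_n) : R :=
  \sum_(j < n) adjmx R e l j.

Definition num_edges (n : nat) (e : rel 'I_n) : nat :=
  #|[set p : 'I_n * 'I_n | (p.1 < p.2)%N && e p.1 p.2]|.

Definition Dinvsqrt (R : realType) (n : nat) (e : rel 'I_n) : 'M[R]_n :=
  diag_mx (\row_l (Num.sqrt (1 + node_degree R e l))^-1).

Definition normadj (R : realType) (n : nat) (e : rel 'I_n) : 'M[R]_n :=
  Dinvsqrt R e *m (adjmx R e + 1%:M) *m Dinvsqrt R e.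

(* X_{s+k}, given X_s = X, via X_{t+1} = A X_t W + U_{t+1} B *)
Fixpoint gnn_recur (R : realType) (n c c' : nat) (A : 'M[R]_n) (W : 'M[R]_c)
  (B : 'M[R]_(c', c)) (U : nat -> 'M[R]_(n, c')) (s : nat) (X : 'M[R]_(n, c))
  (k : nat) : 'M[R]_(n, c) :=
  match k with
  | 0 => X
  | k'.+1 => A *m gnn_recur A W B U s X k' *m W + U (s + k'.+1)%N *m B
  end.

Definition replace_row (R : realType) (n c : nat) (X : 'M[R]_(n, c)) (j : 'I_n)
  (x : 'rV[R]_c) : 'M[R]_(n, c) :=
  \matrix_(k, q) (if k == j then x 0 q else X k q).

(* Jacobian d X_t^{(i)} / d X_s^{(j)} at X_s = X : the c x c matrix whose
   (p,q) entry is the partial derivative of the p-th entry of row i of X_t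
   with respect to the q-th entry of row j of X_s (inputs held fixed). *)
Definition jacobian_XtXs (R : realType) (n c c' : nat) (A : 'M[R]_n) (W : 'M[R]_c)
  (B : 'M[R]_(c', c)) (U : nat -> 'M[R]_(n, c')) (s t : nat)
  (X : 'M[R]_(n, c)) (i j : 'I_n) : 'M[R]_c :=
  \matrix_(p, q)
    'D_(delta_mx 0 q : 'rV[R]_c)
      (fun x : 'rV[R]_c => gnn_recur A W B U s (replace_row X j x) (t - s) i p)
      (row j X).

(* Main.v *)
Require Import Defs.
From HB Require Import structures.
From mathcomp Require Import all_boot all_order all_algebra.
From mathcomp Require Import all_classical all_reals all_analysis.
From mathcomp Require Import ring lra.
Set Implicit Arguments. Unset Strict Implicit. Unset Printing Implicit Defensive.
Import Order.TTheory GRing.Theory Num.Theory.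
Import numFieldNormedType.Exports.
Local Open Scope classical_set_scope.
Local Open Scope ring_scope.

Lemma mulE (R : realType) (n : nat) (P Q : 'M[R]_n) x y :
  (P * Q) x y = \sum_z P x z * Q z y.
Proof. by rewrite -mulmxE mxE. Qed.

Lemma pow_stoch (R : realType) (n : nat) (P : 'M[R]_n) :
  (forall x y, 0 <= P x y) -> (forall x, \sum_y P x y = 1) ->
  forall k, (forall x y, 0 <= (P ^+ k) x y) /\ (forall x, \sum_y (P ^+ k) x y = 1).
Proof.
move=> Hnn Hrow; elim=> [|k [IH1 IH2]].
  rewrite expr0; split=> [x y|x]; rewrite ?mxE ?ler0n //.
  rewrite (bigD1 x) //= big1 ?addr0 ?mxE ?eqxx //.
  by move=> y /negPf Hy; rewrite mxE eq_sym Hy.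
rewrite exprS; split=> [x y|x].
  by rewrite mulE; apply: sumr_ge0 => z _; apply: mulr_ge0.
under eq_bigr do rewrite mulE.
rewrite exchange_big /= -(Hrow x); apply: eq_bigr => z _.
by rewrite -mulr_sumr IH2 mulr1.
Qed.

Lemma bound_step (R : realType) (n : nat) (M : 'M[R]_n) (f : 'I_n -> R) (d lo hi : R) :
  (forall x y, d <= M x y) -> (forall x, \sum_y M x y = 1) ->
  (forall z, lo <= f z <= hi) -> forall x,
  (1 - d *+ n) * lo + d * \sum_z f z <= \sum_z M x z * f z <=
  (1 - d *+ n) * hi + d * \sum_z f z.
Proof.
move=> Hd Hrow Hf x.
have E : \sum_z M x z * f z = \sum_z (M x z - d) * f z + d * \sum_z f z.
  by rewrite mulr_sumr -big_split; apply: eq_bigr => z _ /=; ring.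
have E2 : \sum_z (M x z - d) = 1 - d *+ n.
  by rewrite sumrB Hrow sumr_const card_ord.
rewrite E -E2 !mulr_suml; apply/andP; split; rewrite lerD2r; apply: ler_sum => z _;
  apply: ler_wpM2l; rewrite ?subr_ge0 ?Hd //; by case/andP: (Hf z).
Qed.

Definition Qb (R : realType) (n : nat) (P : 'M[R]_n) (j : 'I_n) (k : nat) (w : R) :=
  exists lo hi, hi - lo <= w /\ forall l, lo <= (P ^+ k) l j <= hi.

Lemma Qstep (R : realType) (n : nat) (P : 'M[R]_n) (j : 'I_n) d (dl : R) k w :
  (forall x y, 0 <= P x y) -> (forall x, \sum_y P x y = 1) ->
  (forall x y, dl <= (P ^+ d) x y) -> 0 <= 1 - dl *+ n ->
  Qb P j k w -> Qb P j (d + k) ((1 - dl *+ n) * w).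
Proof.
move=> Hnn Hrow Hd Hr [lo [hi [Hw Hb]]].
have [_ Hrow'] := pow_stoch Hnn Hrow d.
set S := \sum_z (P ^+ k) z j.
exists ((1 - dl *+ n) * lo + dl * S), ((1 - dl *+ n) * hi + dl * S); split.
  have -> : (1 - dl *+ n) * hi + dl * S - ((1 - dl *+ n) * lo + dl * S) =
            (1 - dl *+ n) * (hi - lo) by ring.
  exact: ler_wpM2l.
move=> l; rewrite exprD mulE.
exact: (bound_step (f := fun z => (P ^+ k) z j) Hd Hrow' Hb).
Qed.

Lemma markov_conv (R : realType) (n : nat) (P : 'M[R]_n) (pi : 'I_n -> R)
  (i j : 'I_n) (m : nat) (dl : R) :
  (forall x y, 0 <= P x y) -> (forall x, \sum_y P x y = 1) ->
  0 < dl -> (forall x y, dl <= (P ^+ m) x y) ->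
  (forall x, 0 <= pi x) -> \sum_x pi x = 1 ->
  (forall y, \sum_x pi x * P x y = pi y) ->
  (fun k => (P ^+ k) i j) @ \oo --> pi j.
Proof.
move=> Hnn Hrow Hdl Hm Hpi0 Hpi1 Hstat.
have n0 : (0 < n)%N by apply: leq_ltn_trans (leq0n i) (ltn_ord i).
set rho := 1 - dl *+ n.
have [_ Hrowm] := pow_stoch Hnn Hrow m.
have rho0 : 0 <= rho.
  rewrite /rho subr_ge0 -(Hrowm i) -[n in dl *+ n]card_ord -sumr_const.
  by apply: ler_sum => y _; apply: Hm.
have rho1 : rho < 1.
  by rewrite /rho ltrBlDr ltrDl pmulrn_lgt0.
have Q0 : Qb P j 0 1.
  exists 0, 1; split; first by rewrite subr0.
  by move=> l; rewrite expr0 mxE ler0n /= lern1 leq_b1.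
have Qmq : forall q, Qb P j (m * q) (rho ^+ q).
  elim=> [|q IH]; first by rewrite muln0 expr0.
  by rewrite mulnS exprS; apply: Qstep.
have Qr : forall r q, Qb P j (r + m * q) (rho ^+ q).
  elim=> [|r IH] q; first by rewrite add0n.
  have Hd : forall x y, 0 <= (P ^+ 1) x y by move=> x y; rewrite expr1.
  have Hz : (0:R) <= 1 - 0 *+ n by rewrite mul0rn subr0.
  have := Qstep Hnn Hrow Hd Hz (IH q).
  by rewrite mul0rn subr0 mul1r add1n addSn.
have Hinv : forall k, \sum_x pi x * (P ^+ k) x j = pi j.
  elim=> [|k IH].
    rewrite expr0 (bigD1 j) //= big1 ?addr0 ?mxE ?eqxx ?mulr1 //.
    by move=> x /negPf Hx; rewrite mxE Hx mulr0.
  rewrite -IH; under eq_bigr do rewrite exprS mulE mulr_sumr.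
  rewrite exchange_big /=; apply: eq_bigr => z _.
  by rewrite -Hstat mulr_suml; apply: eq_bigr => x _; rewrite mulrA.
have Hineq : forall k w, Qb P j k w -> `|pi j - (P ^+ k) i j| <= w.
  move=> k w [lo [hi [Hw Hb]]].
  have H1 : lo <= pi j.
    rewrite -(Hinv k) -[lo]mul1r -Hpi1 mulr_suml; apply: ler_sum => x _.
    by apply: ler_wpM2l => //; case/andP: (Hb x).
  have H2 : pi j <= hi.
    rewrite -(Hinv k) -[hi]mul1r -Hpi1 mulr_suml; apply: ler_sum => x _.
    by apply: ler_wpM2l => //; case/andP: (Hb x).
  case/andP: (Hb i) => H3 H4.
  rewrite ler_norml; apply/andP; split; lra.
apply/cvgrPdist_lt => eps heps.
have Hr : `|rho| < 1 by rewrite ger0_norm.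
move/cvgrPdist_lt: (cvg_expr Hr) => /(_ eps heps) [N _ HN].
have HNe := HN N (leqnn N); rewrite /= sub0r normrN ger0_norm ?exprn_ge0 // in HNe.
near=> k.
have hk : (m * N <= k)%N by near: k; exact: nbhs_infty_ge.
rewrite -(subnK hk).
exact: le_lt_trans (Hineq _ _ (Qr _ _)) HNe.
Unshelve. all: by end_near.
Qed.

Lemma derive_affine (R : realType) (c : nat) (f : 'rV[R]_c -> R) (a v : 'rV[R]_c) (K : R) :
  (forall h : R, f (h *: v + a) - f a = h * K) -> 'D_v f a = K.
Proof.
move=> Hf; rewrite /derive; apply: cvg_lim => //.
apply: cvg_near_cst; near=> h.
rewrite /= /shift Hf -[h * K]/(h *: K) scalerA mulVf ?scale1r //.
near: h; exact: nbhs_dnbhs_neq.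
Unshelve. all: by end_near.
Qed.

Lemma trmx_expr (R : realType) (c : nat) (W : 'M[R]_c) k : (W ^+ k)^T = W^T ^+ k.
Proof.
elim: k => [|k IH]; first by rewrite !expr0 trmx1.
by rewrite exprS exprSr -mulmxE trmx_mul IH mulmxE.
Qed.

Lemma gnn_affine (R : realType) (n c c' : nat) (A : 'M[R]_n) (W : 'M[R]_c)
  (B : 'M[R]_(c', c)) (U : nat -> 'M[R]_(n, c')) (s : nat) k :
  exists C, forall X, gnn_recur A W B U s X k = A ^+ k *m X *m W ^+ k + C.
Proof.
elim: k => [|k [C HC]] /=.
  by exists 0 => X; rewrite !expr0 mul1mx mulmx1 addr0.
exists (A *m C *m W + U (s + k.+1)%N *m B) => X.
rewrite HC mulmxDr mulmxDl addrA; congr (_ + _ + _).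
by rewrite exprS exprSr -!mulmxE !mulmxA.
Qed.

Lemma jac_formula (R : realType) (n c c' : nat) (A : 'M[R]_n) (W : 'M[R]_c)
  (B : 'M[R]_(c', c)) (U : nat -> 'M[R]_(n, c')) (s t : nat) X (i j : 'I_n) :
  jacobian_XtXs A W B U s t X i j = (A ^+ (t - s)) i j *: (W^T ^+ (t - s)).
Proof.
have [C HC] := @gnn_affine R n c c' A W B U s (t - s).
apply/matrixP => p q; rewrite !mxE -trmx_expr mxE.
apply: derive_affine => h.
have E1 : replace_row X j (h *: delta_mx 0 q + row j X) = X + h *: delta_mx j q.
  apply/matrixP => k r; rewrite !mxE eqxx /=.
  case: (k =P j) => [->|_]; first by rewrite addrC.
  by rewrite mulr0 addr0.
have E2 : replace_row X j (row j X) = X.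
  by apply/matrixP => k r; rewrite !mxE; case: eqP => [->|].
rewrite E1 E2 !HC.
set M := A ^+ (t - s); set N := W ^+ (t - s).
have -> : M *m (X + h *: delta_mx j q) *m N = M *m X *m N + h *: (M *m delta_mx j q *m N).
  by rewrite mulmxDr mulmxDl -scalemxAr -scalemxAl.
have DE : forall (Y Z : 'M[R]_(n,c)), (Y + Z) i p = Y i p + Z i p by move=> Y Z; rewrite mxE.
have SE : forall (Y : 'M[R]_(n,c)), (h *: Y) i p = h * Y i p by move=> Y; rewrite mxE.
have HD : (M *m delta_mx j q *m N) i p = M i j * N q p.
  rewrite !mxE (bigD1 q) //= big1 ?addr0; last first.
    move=> r /negPf Hr; rewrite !mxE big1 ?mul0r // => l _.
    by rewrite !mxE Hr andbF mulr0.
  rewrite !mxE (bigD1 j) //= big1 ?addr0; last first.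
    by move=> l /negPf Hl; rewrite !mxE Hl mulr0.
  by rewrite !mxE !eqxx mulr1.
rewrite !DE SE HD.
by ring.
Qed.

Definition aw (R : realType) (n : nat) (e : rel 'I_n) (l z : 'I_n) : R :=
  (e l z)%:R + (l == z)%:R.
Definition Dg (R : realType) (n : nat) (e : rel 'I_n) (l : 'I_n) : R :=
  1 + node_degree R e l.
Definition Pm (R : realType) (n : nat) (e : rel 'I_n) : 'M[R]_n :=
  \matrix_(l, z) (aw R e l z / Dg R e l).

Section G.
Variables (R : realType) (n : nat) (e : rel 'I_n).

Lemma deg_ge0 l : 0 <= node_degree R e l.
Proof. by apply: sumr_ge0 => z _; rewrite mxE ler0n. Qed.

Lemma deg_le l : node_degree R e l <= n%:R.
Proof.
rewrite /node_degree -[n in n%:R]card_ord -sumr_const.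
by apply: ler_sum => z _; rewrite mxE lern1 leq_b1.
Qed.

Lemma Dg_gt0 l : 0 < Dg R e l.
Proof. by rewrite /Dg; have := deg_ge0 l; lra. Qed.

Lemma Dg_le l : Dg R e l <= n.+1%:R.
Proof. by rewrite /Dg -addn1 natrD; have := deg_le l; lra. Qed.

Lemma Dg_sum l : Dg R e l = \sum_z aw R e l z.
Proof.
have H1 : \sum_z ((l == z)%:R : R) = 1.
  rewrite (bigD1 l) //= big1 ?addr0 ?eqxx // => z /negPf Hz.
  by rewrite eq_sym Hz.
rewrite /aw big_split /= H1 /Dg /node_degree addrC; congr (_ + _).
by apply: eq_bigr => z _; rewrite mxE.
Qed.

Lemma aw_ge0 l z : 0 <= aw R e l z.
Proof. by rewrite /aw addr_ge0 ?ler0n. Qed.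

Lemma Pm_ge0 x y : 0 <= Pm R e x y.
Proof. by rewrite mxE divr_ge0 ?aw_ge0 // ltW ?Dg_gt0. Qed.

Lemma Pm_row x : \sum_y Pm R e x y = 1.
Proof.
under eq_bigr do rewrite mxE.
by rewrite -mulr_suml -Dg_sum divff // gt_eqF ?Dg_gt0.
Qed.

Lemma Pm_low x y : e x y || (x == y) -> (n.+1%:R)^-1 <= Pm R e x y.
Proof.
move=> H; rewrite mxE.
have H1 : 1 <= aw R e x y.
  rewrite /aw; case/orP: H => ->; rewrite ?ler0n ?lerDl ?lerDr ?ler0n //.
have Hd := Dg_gt0 x; have Hle := Dg_le x.
apply: le_trans (_ : (Dg R e x)^-1 <= _).
  by rewrite lef_pV2 ?posrE // ltr0Sn.
by rewrite ler_pdivlMr // mulVf ?gt_eqF.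
Qed.

Lemma Pm_step k x y z : Pm R e x y * (Pm R e ^+ k) y z <= (Pm R e ^+ k.+1) x z.
Proof.
have [Hnn _] := pow_stoch Pm_ge0 Pm_row k.
rewrite exprS mulE (bigD1 y) //= lerDl.
by apply: sumr_ge0 => w _; apply: mulr_ge0 => //; apply: Pm_ge0.
Qed.

Lemma Pm_diag k x : (n.+1%:R)^-1 ^+ k <= (Pm R e ^+ k) x x.
Proof.
elim: k => [|k IH]; first by rewrite !expr0 mxE eqxx.
apply: le_trans (Pm_step k x x x).
rewrite exprS; apply: ler_pM => //; rewrite ?exprn_ge0 ?invr_ge0 ?ler0n //.
by apply: Pm_low; rewrite eqxx orbT.
Qed.

Lemma Pm_path p x k : path e x p -> (size p <= k)%N ->
  (n.+1%:R)^-1 ^+ k <= (Pm R e ^+ k) x (last x p).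
Proof.
elim: p x k => [|y p IH] x k /=; first by move=> _ _; apply: Pm_diag.
case/andP=> Hxy Hp; case: k => [//|k] Hk.
apply: le_trans (Pm_step k x y _).
rewrite exprS; apply: ler_pM => //; rewrite ?exprn_ge0 ?invr_ge0 ?ler0n //.
  by apply: Pm_low; rewrite Hxy.
exact: IH.
Qed.

Lemma Pm_pos (Hconn : connected_graph e) x y :
  (n.+1%:R)^-1 ^+ n <= (Pm R e ^+ n) x y.
Proof.
have /connectP [p Hp ->] := Hconn x y.
case: (shortenP Hp) => p' Hp' Hu _.
apply: (@Pm_path p' x n Hp').
have := max_card (mem (x :: p')); rewrite card_ord.
move/card_uniqP: Hu => -> /= H; exact: ltnW.
Qed.

Lemma Pm_stat (Hsimple : simple_graph e) y :
  \sum_x (Dg R e x / \sum_l Dg R e l) * Pm R e x y = Dg R e y / \sum_l Dg R e l.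
Proof.
case: Hsimple => Hsym _.
rewrite Dg_sum mulr_suml; apply: eq_bigr => x _; rewrite mxE.
have := Dg_gt0 x => Hx.
rewrite /aw Hsym eq_sym; field.
apply/andP; split; rewrite gt_eqF //.
rewrite (bigD1 x) //=; apply: (lt_le_trans Hx); rewrite lerDl.
by apply: sumr_ge0 => l _; apply: ltW; apply: Dg_gt0.
Qed.

Lemma normadjE l z : normadj R e l z =
  (Num.sqrt (Dg R e l))^-1 * aw R e l z * (Num.sqrt (Dg R e z))^-1.
Proof.
by rewrite /normadj /Dinvsqrt mul_mx_diag mul_diag_mx !mxE.
Qed.

Lemma Apow k x y : (normadj R e ^+ k) x y =
  Num.sqrt (Dg R e x) * (Pm R e ^+ k) x y / Num.sqrt (Dg R e y).
Proof.
have Hs : forall l, 0 < Num.sqrt (Dg R e l) by move=> l; rewrite sqrtr_gt0 Dg_gt0.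
have Hsq : forall l, Num.sqrt (Dg R e l) * Num.sqrt (Dg R e l) = Dg R e l.
  by move=> l; rewrite -expr2 sqr_sqrtr // ltW ?Dg_gt0.
elim: k x y => [|k IH] x y.
  rewrite !expr0 !mxE; case: eqP => [->|_]; last by rewrite mulr0 mul0r.
  by rewrite mulr1 mulfV // gt_eqF.
rewrite exprSr mulE [in RHS]exprSr mulE mulr_sumr mulr_suml.
apply: eq_bigr => l _; rewrite IH normadjE mxE -[in RHS](Hsq l).
have := Hs l; have := Hs x; have := Hs y => Hy Hx Hl.
field; rewrite !gt_eqF //.
Qed.

Lemma count_edges (Hsimple : simple_graph e) :
  (\sum_(l < n) \sum_(z < n) (e l z : nat) = 2 * num_edges e)%N.
Proof.
case: Hsimple => Hsym Hirr.
have Hsplit : forall l z : 'I_n,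
    (e l z : nat) = (((l < z)%N && e l z) + ((z < l)%N && e l z))%N.
  move=> l z; case Hlz: (e l z); rewrite ?andbF //=.
  case: (ltngtP l z) => H //=.
  have E : l = z by apply: val_inj.
  by rewrite E Hirr in Hlz.
have Hne : num_edges e = (\sum_(l < n) \sum_(z < n) ((l < z)%N && e l z))%N.
  rewrite /num_edges -sum1_card big_mkcond pair_big /=.
  by apply: eq_bigr => p _; rewrite inE; case: (_ && _).
rewrite Hne mul2n -addnn.
under eq_bigr do under eq_bigr do rewrite Hsplit.
under eq_bigr do rewrite big_split /=.
rewrite big_split /=; congr (_ + _)%N.
rewrite exchange_big /=; apply: eq_bigr => z _; apply: eq_bigr => l _.
by rewrite Hsym.
Qed.

Lemma sumDg (Hsimple : simple_graph e) :
  \sum_l Dg R e l = (n + 2 * num_edges e)%:R.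
Proof.
rewrite -(count_edges Hsimple) natrD natr_sum big_split /= sumr_const card_ord.
congr (_ + _); apply: eq_bigr => l _; rewrite natr_sum /node_degree.
by apply: eq_bigr => z _; rewrite mxE.
Qed.

End G.

Theorem theorem3p6 (R : realType) (n : nat) (e : rel 'I_n)
  (Hsimple : simple_graph e) (Hconn : connected_graph e)
  (c c' : nat) (W : 'M[R]_c) (B : 'M[R]_(c', c)) (U : nat -> 'M[R]_(n, c'))
  (i j : 'I_n) :
  exists cij : nat -> R,
    (forall (s t : nat) (X : 'M[R]_(n, c)), (s <= t)%N ->
       jacobian_XtXs (normadj R e) W B U s t X i j = cij (t - s)%N *: (W^T ^+ (t - s))) /\
    (cij @ \oo --> Num.sqrt ((1 + node_degree R e i) * (1 + node_degree R e j))
                   / (n + 2 * num_edges e)%:R).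
Proof.
exists (fun k => (normadj R e ^+ k) i j); split.
  by move=> s t X _; apply: jac_formula.
have HS : 0 < \sum_l Dg R e l.
  rewrite (bigD1 i) //=; apply: (lt_le_trans (@Dg_gt0 R n e i)); rewrite lerDl.
  by apply: sumr_ge0 => l _; apply: ltW; apply: Dg_gt0.
have Hs : forall l, 0 < Num.sqrt (Dg R e l) by move=> l; rewrite sqrtr_gt0 Dg_gt0.
have Hsq : forall l, Num.sqrt (Dg R e l) * Num.sqrt (Dg R e l) = Dg R e l.
  by move=> l; rewrite -expr2 sqr_sqrtr // ltW ?Dg_gt0.
have Hc : (fun k => (normadj R e ^+ k) i j) =
    (fun k => (Num.sqrt (Dg R e i) / Num.sqrt (Dg R e j)) * (Pm R e ^+ k) i j).
  by apply: funext => k; rewrite Apow mulrAC.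
have Hdl : 0 < (n.+1%:R : R)^-1 ^+ n by rewrite exprn_gt0 // invr_gt0 ltr0Sn.
have Hpi0 : forall x, 0 <= Dg R e x / \sum_l Dg R e l.
  by move=> x; rewrite divr_ge0 // ltW ?Dg_gt0.
have Hpi1 : \sum_x (Dg R e x / \sum_l Dg R e l) = 1.
  by rewrite -mulr_suml divff // gt_eqF.
have Hm := @markov_conv R n (Pm R e) (fun x => Dg R e x / \sum_l Dg R e l) i j n _ (@Pm_ge0 R n e) (@Pm_row R n e) Hdl (@Pm_pos R n e Hconn)
  Hpi0 Hpi1 (@Pm_stat R n e Hsimple).
rewrite Hc.
have -> : Num.sqrt ((1 + node_degree R e i) * (1 + node_degree R e j))
          / (n + 2 * num_edges e)%:R =
    (Num.sqrt (Dg R e i) / Num.sqrt (Dg R e j)) * (Dg R e j / \sum_l Dg R e l).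
  rewrite -/(Dg R e i) -/(Dg R e j) sqrtrM ?(ltW (@Dg_gt0 R n e i)) // -(@sumDg R n e Hsimple).
  rewrite -[X in _ * (X / _)](Hsq j).
  have := Hs i; have := Hs j => Hj Hi.
  by field; rewrite !gt_eqF.
exact: cvgMr Hm.
Qed.
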